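(* Let $p = p_{AB}$ be a probability distribution on $A\times B$ with $|A| = |B| = d$, and write $\eta = d_H^2(p\|p_A\times p_B)$. Then $I(A:B)_p\le\eta\cdot O(\log(d/\eta))$.
   Context: $p_A,p_B$ are the marginals of $p$. The squared Hellinger distance is $d_H^2(p\|q) = \sum_i(\sqrt{p_i}-\sqrt{q_i})^2$. $I(A:B)_p = \sum_{a,b}p(a,b)\ln\frac{p(a,b)}{p_A(a)p_B(b)}$. The $O(\cdot)$ hides a universal constant. *)

(* Defs.v *)
From HB Require Import structures.
From mathcomp Require Import all_boot all_order all_algebra.
From mathcomp Require Import all_classical all_reals all_analysis.
Set Implicit Arguments. Unset Strict Implicit. Unset Printing Implicit Defensive.
Import Order.TTheory GRing.Theory Num.Theory.
Local Open Scope ring_scope.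

Definition is_distr (R : realType) (T : finType) (p : T -> R) : Prop :=
  (forall x, 0 <= p x) /\ \sum_(x : T) p x = 1.

Definition margA (R : realType) (A B : finType) (p : A * B -> R) (a : A) : R :=
  \sum_(b : B) p (a, b).
Definition margB (R : realType) (A B : finType) (p : A * B -> R) (b : B) : R :=
  \sum_(a : A) p (a, b).

Definition hellinger2 (R : realType) (T : finType) (p q : T -> R) : R :=
  \sum_(i : T) (Num.sqrt (p i) - Num.sqrt (q i)) ^+ 2.

(* Mutual information (natural log); terms with p(a,b) = 0 contribute 0
   since ln 0 = 0 in MathComp-Analysis. *)
Definition mutinfo (R : realType) (A B : finType) (p : A * B -> R) : R :=
  \sum_(ab : A * B) p ab * ln (p ab / (margA p ab.1 * margB p ab.2)).

(* Main.v *)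
From HB Require Import structures.
From mathcomp Require Import all_boot all_order all_algebra.
From mathcomp Require Import all_classical all_reals all_analysis.
From mathcomp Require Import ring lra.
Require Import Defs.
Import Order.TTheory GRing.Theory Num.Theory.
Local Open Scope ring_scope.

Section S.
Variable R : realType.

Lemma ln_le_sub1 (x : R) : 0 < x -> ln x <= x - 1.
Proof.
move=> x0; have := @le_ln1Dx R (x - 1).
by rewrite [1 + _]addrC subrK; apply; lra.
Qed.

Lemma term_bound (p q t : R) : 0 <= p <= 1 -> 0 <= q -> p ^+ 2 <= q -> 0 < t <= 1 ->
  p * ln (p / q) - p + q <=
  5 * (Num.sqrt p - Num.sqrt q) ^+ 2 * (1 + ln t^-1) + t.
Proof.
move=> /andP[p0 p1] q0 pq /andP[t0 t1].
have L0 : 0 <= ln t^-1 by apply: ln_ge0; rewrite invf_ge1 //.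
have [->|pgt0] := eqVneq p 0.
  rewrite mul0r subrr add0r sqrtr0 sub0r sqrrN sqr_sqrtr //.
  nra.
have {p0 pgt0} p0 : 0 < p by rewrite lt0r pgt0.
have q0' : 0 < q by apply: lt_le_trans pq; exact: exprn_gt0.
set u := Num.sqrt p; set v := Num.sqrt q.
have u0 : 0 < u by rewrite sqrtr_gt0.
have v0 : 0 < v by rewrite sqrtr_gt0.
have pu : p = u ^+ 2 by rewrite sqr_sqrtr // ltW.
have qv : q = v ^+ 2 by rewrite sqr_sqrtr // ltW.
have [uv|uv] := lerP u (2 * v).
  set w := u / v.
  have uw : u = w * v by rewrite /w divfK // gt_eqF.
  have w0 : 0 < w by rewrite divr_gt0.
  have w2 : w <= 2 by rewrite /w ler_pdivrMr //.
  have lnpq : ln (p / q) <= 2 * (w - 1).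
    have -> : p / q = w ^+ 2 by rewrite pu qv uw exprMn mulfK // expf_neq0 // gt_eqF.
    rewrite lnXn // mulr2n; have := @ln_le_sub1 w w0; lra.
  have : p * ln (p / q) <= p * (2 * (w - 1)) by rewrite ler_wpM2l // ltW.
  rewrite pu qv uw => H.
  have H2 : 0 <= v ^+ 2 * (w - 1) ^+ 2 * (4 - 2 * w) by
    apply: mulr_ge0; [apply: mulr_ge0; rewrite ?sqr_ge0 // exprn_ge0 // ltW| lra].
  have H3 : 0 <= v ^+ 2 * (w - 1) ^+ 2 * ln t^-1 by
    apply: mulr_ge0 => //; apply: mulr_ge0; rewrite ?sqr_ge0 // exprn_ge0 // ltW.
  nra.
have qp : q <= p / 4 by rewrite pu qv; nra.
have h4 : p <= 4 * (u - v) ^+ 2 by rewrite pu; nra.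
have lnp : ln (p / q) <= ln t^-1 + (t / p - 1).
  apply: (@le_trans _ _ (ln p^-1)).
    rewrite ler_ln ?posrE ?divr_gt0 ?invr_gt0 //.
    by rewrite ler_pdivrMr // [_ * q]mulrC ler_pdivlMr // -expr2.
  rewrite {1}(_ : p^-1 = t^-1 * (t / p)); last by rewrite mulrA mulVf ?gt_eqF // mul1r.
  rewrite lnM ?posrE ?invr_gt0 ?divr_gt0 // lerD2l.
  by apply: ln_le_sub1; rewrite divr_gt0.
have : p * ln (p / q) <= p * (ln t^-1 + (t / p - 1)) by rewrite ler_wpM2l // ltW.
rewrite mulrDr mulrBr mulr1 mulrCA divff ?gt_eqF // mulr1 => H.
have H3 : p * ln t^-1 <= 4 * (u - v) ^+ 2 * ln t^-1 by rewrite ler_wpM2r.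
nra.
Qed.

Lemma le_sum_term (T : finType) (F : T -> R) i : (forall j, 0 <= F j) -> F i <= \sum_j F j.
Proof. by move=> F0; rewrite (bigD1 i) //= lerDl sumr_ge0. Qed.
End S.

Section M.
Variable R : realType.
Variables (A B : finType) (p : A * B -> R).
Hypothesis p0 : forall x, 0 <= p x.
Hypothesis psum : \sum_x p x = 1.

Lemma mA_ge0 a : 0 <= (margA p) a. Proof. by apply: sumr_ge0 => b _. Qed.
Lemma mB_ge0 b : 0 <= (margB p) b. Proof. by apply: sumr_ge0 => a _. Qed.
Lemma sum_mA : \sum_a (margA p) a = 1.
Proof. by rewrite /margA (pair_bigA _ (fun a b => p (a, b))) -psum; apply: eq_bigr => -[]. Qed.
Lemma sum_mB : \sum_b (margB p) b = 1.
Proof. by rewrite /margB exchange_big (pair_bigA _ (fun a b => p (a, b))) -psum; apply: eq_bigr => -[]. Qed.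
Lemma p_le_mA a b : p (a, b) <= (margA p) a.
Proof. by rewrite /margA; apply: (@le_sum_term R _ (fun b => p (a, b))) => j. Qed.
Lemma p_le_mB a b : p (a, b) <= (margB p) b.
Proof. by rewrite /margB; apply: (@le_sum_term R _ (fun a => p (a, b))) => j. Qed.
Lemma p_le1 x : p x <= 1.
Proof. by rewrite -psum; apply: (@le_sum_term R). Qed.
Lemma mA_le1 a : (margA p) a <= 1.
Proof. rewrite -sum_mA; apply: (@le_sum_term R); exact: mA_ge0. Qed.
Lemma sum_q : \sum_(x : A * B) (margA p) x.1 * (margB p) x.2 = 1.
Proof.
rewrite -(pair_bigA _ (fun a b => (margA p) a * (margB p) b)) /=.
under eq_bigr do rewrite -mulr_sumr sum_mB mulr1.
exact: sum_mA.
Qed.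

Let eta := hellinger2 p (fun ab => margA p ab.1 * margB p ab.2).

Lemma key t : 0 < t <= 1 ->
  mutinfo p <= 5 * eta * (1 + ln t^-1) + t * (#|A| * #|B|)%:R.
Proof.
move=> ht.
have E : mutinfo p = \sum_(x : A * B) (p x * ln (p x / ((margA p) x.1 * (margB p) x.2)) - p x + (margA p) x.1 * (margB p) x.2).
  rewrite big_split big_split sumrN psum sum_q /=; by rewrite subrK.
rewrite E.
apply: (@le_trans _ _ (\sum_(x : A * B) (5 * (Num.sqrt (p x) - Num.sqrt ((margA p) x.1 * (margB p) x.2)) ^+ 2 * (1 + ln t^-1) + t))).
  apply: ler_sum => x _; apply: (@term_bound R _ _ t) => //.
  - by rewrite p0 p_le1.
  - by apply: mulr_ge0; [apply: mA_ge0 | apply: mB_ge0].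
  - by case: x => a b; rewrite expr2 /=; apply: ler_pM => //; [apply: p_le_mA | apply: p_le_mB].
rewrite big_split sumr_const card_prod -!mulr_suml -mulr_sumr /eta /hellinger2 -[t *+ _]mulr_natr.
exact: lexx.
Qed.

Lemma cardA_gt0 : (0 < #|A|)%N.
Proof.
have [a _|A0] := pickP (fun _ : A => true); first by apply/card_gt0P; exists a.
by move: sum_mA; rewrite big_pred0 // => /esym/eqP; rewrite oner_eq0.
Qed.

Lemma eta_bound : #|A|%:R * eta <= 2 * #|A|%:R - 2.
Proof.
set d : R := #|A|%:R.
have d0 : 0 < d by rewrite ltr0n cardA_gt0.
set S := \sum_(x : A * B) Num.sqrt (p x) * Num.sqrt (margA p x.1 * margB p x.2).
have hE : eta = 2 - 2 * S.
  rewrite /eta /hellinger2.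
  have H : forall x : A * B, (Num.sqrt (p x) - Num.sqrt (margA p x.1 * margB p x.2)) ^+ 2
     = p x + margA p x.1 * margB p x.2 - 2 * (Num.sqrt (p x) * Num.sqrt (margA p x.1 * margB p x.2)).
    move=> x; rewrite sqrrB !sqr_sqrtr //; first ring.
    by apply: mulr_ge0; [apply: mA_ge0 | apply: mB_ge0].
  rewrite (eq_bigr _ (fun x _ => H x)) big_split big_split sumrN psum sum_q -mulr_sumr.
  rewrite -/S; change (1 + 1 - 2 * S = 2 - 2 * S :> R); lra.
have hS : \sum_a margA p a ^+ 2 <= S.
  have -> : \sum_a margA p a ^+ 2 = \sum_(x : A * B) p x * margA p x.1.
    transitivity (\sum_a \sum_b p (a, b) * margA p a).
      by apply: eq_bigr => a _; rewrite -mulr_suml expr2.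
    by rewrite pair_bigA; apply: eq_bigr => -[a b].
  apply: ler_sum => -[a b] _ /=.
  have pa := p_le_mA a b; have pb := p_le_mB a b; have a1 := mA_le1 a.
  have a0 := mA_ge0 a; have b0 := mB_ge0 b; have pp := p0 (a, b).
  rewrite -sqrtrM // -(ger0_norm (mulr_ge0 pp a0)) -sqrtr_sqr ler_sqrt; last first.
    by apply: mulr_ge0 => //; apply: mulr_ge0.
  have h1 : p (a, b) * margA p a <= margB p b by nra.
  have h2 : 0 <= (p (a, b) * margA p a) * (margB p b - p (a, b) * margA p a).
    by apply: mulr_ge0; [apply: mulr_ge0 | lra].
  nra.
have hM : 1 <= d * \sum_a margA p a ^+ 2.
  have H0 : 0 <= \sum_(a : A) (margA p a * d - 1) ^+ 2 by apply: sumr_ge0 => a _; exact: sqr_ge0.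
  have E2 : \sum_(a : A) (margA p a * d - 1) ^+ 2 = \sum_(a : A) (d ^+ 2 * margA p a ^+ 2 - 2 * d * margA p a + 1).
    by apply: eq_bigr => a _; ring.
  move: H0; rewrite E2; rewrite big_split big_split sumrN sumr_const -!mulr_sumr sum_mA.
  rewrite -/d; set X := \sum_a margA p a ^+ 2 => H0.
  have H1 : 0 <= d ^+ 2 * X - 2 * d * 1 + d := H0.
  have : 0 <= d * (d * X - 1) by rewrite mulrBr mulr1 mulrA -expr2; lra.
  by rewrite pmulr_rge0 // subr_ge0.
rewrite hE; nra.
Qed.
End M.

Theorem corollary4p2 (R : realType) :
  exists C : R, 0 < C /\
    forall (A B : finType) (p : A * B -> R),
      #|A| = #|B| -> is_distr p ->
      let d : R := (#|A|)%:R in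
      let eta := hellinger2 p (fun ab => margA p ab.1 * margB p ab.2) in
      mutinfo p <= C * (eta * ln (d / eta)).
Proof.
have l2 : 0 < ln (2:R) by apply: ln_gt0; lra.
exists (6 / ln 2 + 15); split.
  have : 0 < 6 / ln (2:R) by rewrite divr_gt0.
  lra.
move=> A B p hAB [p0 psum]; cbv zeta.
set d : R := #|A|%:R.
set eta := hellinger2 p (fun ab => margA p ab.1 * margB p ab.2).
have K t : 0 < t <= 1 -> mutinfo p <= 5 * eta * (1 + ln t^-1) + t * (d * d).
  by move=> ht; have := @key R A B p p0 psum t ht; rewrite -hAB natrM.
have EB : d * eta <= 2 * d - 2 := @eta_bound R A B p p0 psum.
have d0 : 0 < d by rewrite ltr0n (@cardA_gt0 R A B p psum).
have eta0 : 0 <= eta by apply: sumr_ge0 => x _; exact: sqr_ge0.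
move: K; set D := mutinfo p => K.
have N0 : 0 <= d * d by nra.
have [e0|epos] := eqVneq eta 0.
  rewrite e0 mul0r mulr0 leNgt; apply/negP => Dpos.
  set N := d * d in K N0.
  set t := D / (2 * (N + D)).
  have ND : 0 < 2 * (N + D) by lra.
  have ht2 : t * (2 * (N + D)) = D by rewrite /t divfK // gt_eqF.
  have ht : 0 < t <= 1.
    apply/andP; split; first by rewrite divr_gt0.
    by rewrite ler_pdivrMr // mul1r; lra.
  have := K t ht; rewrite e0 mulr0 mul0r add0r => Kt.
  have := ler_wpM2r (ltW ND) Kt.
  rewrite mulrAC ht2 => H.
  nra.
have epos' : 0 < eta by rewrite lt0r epos.
have d1 : 1 < d by nra.
have d2 : 2 <= d by move: d1; rewrite /d ltr1n => d1; rewrite (ler_nat R 2).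
have ed : 2 * eta <= d by nra.
have e2 : eta <= 2 by nra.
set t := eta / (d * d).
have dd0 : 0 < d * d by rewrite mulr_gt0.
have ht : 0 < t <= 1.
  apply/andP; split; first by rewrite divr_gt0.
  by rewrite ler_pdivrMr // mul1r; nra.
have := K t ht.
rewrite /t divfK ?gt_eqF // invf_div -[d * d / eta]mulrA.
have LE : ln (d * (d / eta)) = ln d + ln (d / eta) by apply: lnM; rewrite posrE ?divr_gt0 ?invr_gt0.
rewrite LE.
set L := ln (d / eta).
have Hd : ln d <= ln 2 + L.
  have LE2 : ln (2 * (d / eta)) = ln 2 + L by apply: lnM; rewrite posrE ?divr_gt0 ?invr_gt0.
  rewrite -LE2 ler_ln ?posrE ?mulr_gt0 ?divr_gt0 ?invr_gt0 //.
  by rewrite mulrA ler_pdivlMr //; nra.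
have HL : ln 2 <= L.
  by rewrite /L ler_ln ?posrE ?divr_gt0 ?invr_gt0 // ler_pdivlMr //; lra.
move=> HK.
have X1 : eta * ln d <= eta * (ln 2 + L) by rewrite ler_wpM2l.
have X2 : eta * ln 2 <= eta * L by rewrite ler_wpM2l.
have X3 : eta <= eta * L / ln 2 by rewrite ler_pdivlMr.
have G : (6 / ln 2 + 15) * (eta * L) = 6 * (eta * L / ln 2) + 15 * (eta * L).
  by field; rewrite gt_eqF.
rewrite G.
nra.
Qed.
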